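(* Let $\Gamma$ be a totally ordered additive abelian group, let $\mathsf{M}=(E,\nu_{\mathsf{M}})$ be a valuated matroid of rank $r$ on a finite set $E$ with values in $\overline{\Gamma}$, and let $\widetilde{\nu}_{\mathsf{M}}\colon\binom{E}{\leq r}\to\overline{\Gamma}$ be given by $\widetilde{\nu}_{\mathsf{M}}(S)=\min\{\nu_{\mathsf{M}}(B)\mid B\in\binom{E}{r},\ S\subseteq B\}$. Let $Q$ be a finite set disjoint from $E$ and $\widetilde{E}=Q\sqcup E$. Define $\nu_{\widetilde{\mathsf{M}}}\colon\binom{\widetilde{E}}{r}\to\overline{\Gamma}$ by $\nu_{\widetilde{\mathsf{M}}}(\widetilde{S})=\widetilde{\nu}_{\mathsf{M}}(\widetilde{S}\cap E)$. Then $\nu_{\widetilde{\mathsf{M}}}$ is a valuated matroid of rank $r$ on $\widetilde{E}$.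
   Context: $\overline{\Gamma}=\Gamma\sqcup\{\infty\}$ with $\infty$ larger than every element of $\Gamma$. $\binom{X}{r}$ and $\binom{X}{\leq r}$ denote the sets of subsets of $X$ with exactly $r$, resp. at most $r$, elements. A valuated matroid of rank $r$ on a finite set $X$ is a map $\nu\colon\binom{X}{r}\to\overline{\Gamma}$, not identically $\infty$, such that for all $S,T\in\binom{X}{r}$ and every $s\in S- T$ there is $t\in T- S$ with $\nu(S)+\nu(T)\geq\nu(S-\{s\}\cup\{t\})+\nu(T-\{t\}\cup\{s\})$. *)

(* Defs.v *)
From mathcomp Require Import all_boot all_order all_algebra.
Set Implicit Arguments. Unset Strict Implicit. Unset Printing Implicit Defensive.
Import GRing.Theory.
Local Open Scope ring_scope.

Definition totally_ordered_group (G : zmodType) (le : rel G) : Prop :=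
  [/\ reflexive le, antisymmetric le, transitive le, total le &
      forall a b c : G, le a b -> le (a + c) (b + c)].

(* Gamma-bar = Gamma ⊔ {oo}, encoded as option G with None = oo. *)
Definition oadd (G : zmodType) (x y : option G) : option G :=
  match x, y with Some a, Some b => Some (a + b) | _, _ => None end.

Definition ole (G : zmodType) (le : rel G) (x y : option G) : bool :=
  match x, y with
  | _, None => true
  | None, Some _ => false
  | Some a, Some b => le a b
  end.

Definition omin (G : zmodType) (le : rel G) (x y : option G) : option G :=
  if ole le x y then x else y.

(* valuated matroid of rank r on the finite set X (a finType);
   nu is only considered on r-element subsets *)
Definition valuated_matroid (G : zmodType) (le : rel G) (X : finType) (r : nat)
    (nu : {set X} -> option G) : Prop :=
  (exists S : {set X}, #|S| = r /\ nu S <> None) /\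
  forall S T : {set X}, #|S| = r -> #|T| = r ->
    forall s, s \in S :\: T ->
      exists2 t, t \in T :\: S &
        ole le (oadd (nu ((S :\ s) :|: [set t])) (nu ((T :\ t) :|: [set s])))
               (oadd (nu S) (nu T)).

(* nu-tilde(S) = min { nu(B) | #|B| = r, S \subset B } (min of empty = oo) *)
Definition nu_tilde (G : zmodType) (le : rel G) (X : finType) (r : nat)
    (nu : {set X} -> option G) (S : {set X}) : option G :=
  \big[omin le/None]_(B : {set X} | (#|B| == r) && (S \subset B)) nu B.

(* E-tilde = Q ⊔ E as the sum type Q + E; S-tilde ∩ E as a subset of E *)
Definition inter_E (Q E : finType) (S : {set Q + E}) : {set E} :=
  [set e | inr e \in S].

Definition nu_ext (G : zmodType) (le : rel G) (Q E : finType) (r : nat)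
    (nu : {set E} -> option G) (S : {set Q + E}) : option G :=
  nu_tilde le r nu (inter_E S).

(* Main.v *)
Require Import Defs.
From mathcomp Require Import all_boot all_order all_algebra.
From mathcomp Require Import zify.
Set Implicit Arguments. Unset Strict Implicit. Unset Printing Implicit Defensive.
Import GRing.Theory.


Section Basics.
Variables (G : zmodType) (le : rel G) (hG : totally_ordered_group le).

Lemma le_refl a : le a a. Proof. by case: hG. Qed.
Lemma le_trans a b c : le a b -> le b c -> le a c.
Proof. case: hG => _ _ h _ _ ab bc; exact: (h b a c ab bc). Qed.
Lemma le_total a b : le a b || le b a. Proof. by case: hG => _ _ _ h _. Qed.
Lemma le_addr a b c : le a b -> le (a + c)%R (b + c)%R. Proof. by case: hG => _ _ _ _ h; apply: h. Qed.
Lemma le_addl a b c : le a b -> le (c + a)%R (c + b)%R.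
Proof. by move=> h; rewrite ![(c + _)%R]addrC; apply: le_addr. Qed.
Lemma leD a b c d : le a b -> le c d -> le (a + c)%R (b + d)%R.
Proof. move=> h1 h2; apply: (le_trans (le_addr c h1)); exact: le_addl. Qed.
Lemma le_cancel a b c : le (a + c)%R (b + c)%R -> le a b.
Proof. by move=> h; have := le_addr (- c)%R h; rewrite !addrK. Qed.

Local Notation ole := (ole le).
Local Notation omin := (omin le).

Lemma ole_refl x : ole x x. Proof. by case: x => //= a; apply: le_refl. Qed.
Lemma ole_None x : ole x None. Proof. by case: x. Qed.
Lemma ole_trans x y z : ole x y -> ole y z -> ole x z.
Proof. by case: x; case: y; case: z => //= a b c; apply: le_trans. Qed.
Lemma ole_total x y : ole x y || ole y x.
Proof. by case: x; case: y => //= a b; apply: le_total. Qed.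
Lemma oadd_mono a b c d : ole a c -> ole b d -> ole (oadd a b) (oadd c d).
Proof. by case: a; case: b; case: c; case: d => //= *; apply: leD. Qed.
Lemma ole_Some x v : ole x (Some v) -> exists a, x = Some a.
Proof. by case: x => // a; exists a. Qed.
Lemma oadd_Some x y v : ole (oadd x y) (Some v) -> exists a b, x = Some a /\ y = Some b.
Proof. by case: x; case: y => // a b; exists b, a. Qed.

Lemma omin_l x y : ole (omin x y) x.
Proof. rewrite /Defs.omin; case: ifP => h; first exact: ole_refl.
by have := ole_total x y; rewrite h. Qed.
Lemma omin_r x y : ole (omin x y) y.
Proof. rewrite /Defs.omin; case: ifP => h //; exact: ole_refl. Qed.

Lemma bigmin_le (I : eqType) (s : seq I) (P : pred I) (F : I -> option G) j :
  j \in s -> P j -> ole (\big[omin/None]_(i <- s | P i) F i) (F j).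
Proof.
elim: s => // i s IH; rewrite inE big_cons => /orP[/eqP<- -> | js Pj].
  exact: omin_l.
case: ifP => _; last exact: IH.
exact: ole_trans (omin_r _ _) (IH js Pj).
Qed.

Lemma bigmin_attain (I : eqType) (s : seq I) (P : pred I) (F : I -> option G) :
  \big[omin/None]_(i <- s | P i) F i = None \/
  exists2 i, (i \in s) && P i & \big[omin/None]_(i <- s | P i) F i = F i.
Proof.
elim: s => [|i s IH]; first by left; rewrite big_nil.
rewrite big_cons; case: ifP => Pi.
  rewrite /Defs.omin; case: ifP => _.
    by right; exists i => //; rewrite inE eqxx Pi.
  case: IH => [->|[j /andP[js Pj] ->]]; first by left.
  by right; exists j => //; rewrite inE js orbT Pj.
case: IH => [->|[j /andP[js Pj] ->]]; first by left.
by right; exists j => //; rewrite inE js orbT Pj.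
Qed.



Lemma swap_card (T : finType) (A : {set T}) x y :
  x \in A -> y \notin A -> #|A :\ x :|: [set y]| = #|A|.
Proof.
move=> xA yA; rewrite setUC cardsU1 (cardsD1 x A) xA !inE negb_and yA orbT /=.
by [].
Qed.

Lemma cardD_sym (T : finType) (A B : {set T}) : #|A| = #|B| -> #|A :\: B| = #|B :\: A|.
Proof. by move=> h; rewrite !cardsD h setIC. Qed.

Section Inter.
Variables (Q E : finType).
Lemma inE_E (A : {set Q + E}) z : (z \in inter_E A) = (inr z \in A).
Proof. by rewrite inE. Qed.
Lemma card_E_le (A : {set Q + E}) : (#|inter_E A| <= #|A|)%N.
Proof.
rewrite -(card_imset (inter_E A) (@inr_inj Q E)); apply: subset_leq_card.
by apply/subsetP => _ /imsetP[z zA ->]; rewrite -inE_E.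
Qed.
Lemma card_E_eq (A : {set Q + E}) :
  (forall t, t \in A -> exists y, t = inr y) -> #|inter_E A| = #|A|.
Proof.
move=> h; apply/eqP; rewrite eqn_leq card_E_le /=.
rewrite -(card_imset (inter_E A) (@inr_inj Q E)); apply: subset_leq_card.
apply/subsetP => t tA; have [y ty] := h t tA; subst t.
by apply/imsetP; exists y => //; rewrite inE_E.
Qed.
End Inter.





Lemma mix (V b c b1 c1 b2 c2 fx fy : option G) :
  V = oadd fx fy -> V <> None -> ole (oadd b1 c1) (oadd b c) ->
  ole (oadd b2 c2) (oadd b c) -> ole (oadd b c) V -> ole fx b2 -> ole fy c1 ->
  ole (oadd b1 c2) V.
Proof.
move=> hV hVN h1 h2 h0 hx hy.
case: V hV hVN h0 => [v|] // hV _ h0.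
have [x [y [ex ey]]] : exists x y, fx = Some x /\ fy = Some y.
  by move: hV; clear; case: fx; case: fy => // a b _; exists b, a.
subst fx fy; case: hV => hv; subst v.
have [bb [cc [eb ec]]] := oadd_Some h0; subst b c.
have [bb1 [cc1 [eb1 ec1]]] := oadd_Some h1; subst b1 c1.
have [bb2 [cc2 [eb2 ec2]]] := oadd_Some h2; subst b2 c2.
rewrite /= in h0 h1 h2 hx hy *.
apply: (@le_cancel _ _ (bb2 + cc1)%R).
have -> : (bb1 + cc2 + (bb2 + cc1) = (bb1 + cc1) + (bb2 + cc2))%R.
  by rewrite addrACA [(cc2 + _)%R]addrC addrACA.
apply: (le_trans (leD h1 h2)); apply: (le_trans (leD h0 h0)).
apply: le_addl; exact: leD.
Qed.

End Basics.



Section Main.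
Variables (G : zmodType) (le : rel G) (hG : totally_ordered_group le).
Variables (E Q : finType) (r : nat) (nu : {set E} -> option G).
Hypothesis hM : valuated_matroid le r nu.
Local Notation ole := (ole le).
Local Notation f := (nu_tilde le r nu).

Lemma f_le (A B : {set E}) : #|B| = r -> A \subset B -> ole (f A) (nu B).
Proof.
move=> hB hAB; rewrite /nu_tilde; apply: (bigmin_le hG); first exact: mem_index_enum.
by rewrite hB eqxx hAB.
Qed.

Lemma f_opt (A : {set E}) : f A <> None -> exists B : {set E}, [/\ #|B| = r, A \subset B, nu B = f A &
   forall D : {set E}, #|D| = r -> A \subset D -> ole (nu B) (nu D)].
Proof.
move=> h; have := @bigmin_attain _ le _ (index_enum _)
   (fun B : {set E} => (#|B| == r) && (A \subset B)) nu.
case=> [hN|[B /andP[_ /andP[/eqP hB hAB]] hf]]; first by case: h.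
exists B; split => // D hD hAD; rewrite -/(nu_tilde le r nu A) in hf.
by rewrite -hf; apply: f_le.
Qed.

Variables (S T : {set Q + E}) (s : Q + E).
Hypotheses (hS : #|S| = r) (hT : #|T| = r) (hs : s \in S :\: T).
Local Notation X0 := (inter_E (S :\ s)).
Local Notation Y0 := (inter_E (T :|: [set s])).
Variable V : option G.
Hypothesis hV : V = oadd (f (inter_E S)) (f (inter_E T)).
Hypothesis hVN : V <> None.

Definition goalP := exists2 t, t \in T :\: S &
  ole (oadd (nu_ext le r nu (S :\ s :|: [set t])) (nu_ext le r nu (T :\ t :|: [set s]))) V.

Lemma fin t (B1 C1 : {set E}) : t \in T :\: S -> #|B1| = r -> #|C1| = r ->
  inter_E (S :\ s :|: [set t]) \subset B1 -> inter_E (T :\ t :|: [set s]) \subset C1 ->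
  ole (oadd (nu B1) (nu C1)) V -> goalP.
Proof.
move=> ht hB1 hC1 h1 h2 h; exists t => //; apply: (ole_trans hG) h.
by apply: (oadd_mono hG); apply: f_le.
Qed.

Lemma sT : s \notin T. Proof. by move: hs; rewrite inE => /andP[]. Qed.
Lemma sS : s \in S. Proof. by move: hs; rewrite inE => /andP[]. Qed.

Section Step.
Variables (B : {set E}) (hB : #|B| = r) (hXB : X0 \subset B)
  (bopt : forall D : {set E}, #|D| = r -> X0 \subset D -> ole (nu B) (nu D)).

Definition improve (C : {set E}) := exists C' : {set E}, [/\ #|C'| = r, Y0 \subset C',
  ole (oadd (nu B) (nu C')) V & (#|B :&: C| < #|B :&: C'|)%N].

Lemma notS (y : E) : y \notin B -> inr y \in T -> inr y \notin S.
Proof.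
move=> yB yT; apply/negP => yS; move/negP: yB; apply; apply: (subsetP hXB).
rewrite inE_E !inE yS andbT; apply/eqP => ys; move: sT; by rewrite -ys yT.
Qed.

Lemma brA (x y : E) (C : {set E}) : #|C| = r -> Y0 \subset C -> ole (oadd (nu B) (nu C)) V ->
  x \in B :\: C -> x \notin X0 -> y \in C :\: B -> inr y \in T ->
  ole (oadd (nu (B :\ x :|: [set y])) (nu (C :\ y :|: [set x]))) (oadd (nu B) (nu C)) ->
  goalP.
Proof.
move=> hC hYC hBC xBC xX yCB yT hex.
move: xBC yCB; rewrite !inE => /andP[xC xB] /andP[yB yC].
apply: (fin (t := inr y) (B1 := B :\ x :|: [set y]) (C1 := C :\ y :|: [set x])).
- by rewrite inE notS ?yT.
- by rewrite swap_card // yB.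
- by rewrite swap_card.
- apply/subsetP => z; rewrite inE_E !inE => /orP[/andP[zs zS]|/eqP[->]]; last by rewrite eqxx orbT.
  have zX : z \in X0 by rewrite inE_E !inE zs zS.
  rewrite (subsetP hXB _ zX) andbT; apply/orP; left; apply: contraNneq xX => <-; done.
- apply/subsetP => z; rewrite inE_E !inE => /orP[/andP[zy zT]|/eqP zs].
    have zY : z \in Y0 by rewrite inE_E !inE zT.
    rewrite (subsetP hYC _ zY) andbT; apply/orP; left; apply: contraNneq zy => ->; done.
  have zY : z \in Y0 by rewrite inE_E !inE zs eqxx orbT.
  rewrite (subsetP hYC _ zY) andbT; apply/orP; left; apply/eqP => zy.
  by move: sT; rewrite -zs zy yT.
- exact: (ole_trans hG) hex hBC.
Qed.


Lemma X0sub (A : {set E}) x y : X0 \subset A -> x \notin X0 -> X0 \subset A :\ x :|: [set y].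
Proof.
move=> hA xX; apply/subsetP => z zX; rewrite !inE (subsetP hA _ zX) andbT.
by apply/orP; left; apply: contraNneq xX => <-.
Qed.

Lemma Y0sub (A : {set E}) y x : Y0 \subset A -> y \notin Y0 -> Y0 \subset A :\ y :|: [set x].
Proof.
move=> hA yY; apply/subsetP => z zY; rewrite !inE (subsetP hA _ zY) andbT.
by apply/orP; left; apply: contraNneq yY => <-.
Qed.

Lemma inc (C C' : {set E}) x : x \in B -> x \notin C -> x \in C' -> B :&: C \subset C' ->
  (#|B :&: C| < #|B :&: C'|)%N.
Proof.
move=> xB xC xC' h.
have h1 : x |: (B :&: C) \subset B :&: C'.
  apply/subsetP => z; rewrite !inE => /orP[/eqP->|/andP[zB zC]]; first by rewrite xB xC'.
  by rewrite zB (subsetP h z) // inE zB.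
have := subset_leq_card h1; rewrite cardsU1 !inE (negbTE xC) andbF /=.
by rewrite add1n.
Qed.

Lemma brB (x y : E) (C : {set E}) : #|C| = r -> Y0 \subset C -> ole (oadd (nu B) (nu C)) V ->
  x \in B :\: C -> x \notin X0 -> y \in C :\: B -> y \notin Y0 ->
  ole (oadd (nu (B :\ x :|: [set y])) (nu (C :\ y :|: [set x]))) (oadd (nu B) (nu C)) ->
  improve C.
Proof.
move=> hC hYC hBC xBC xX yCB yY hex.
move: (xBC) (yCB); rewrite !inE => /andP[xC xB] /andP[yB yC].
exists (C :\ y :|: [set x]); split.
- by rewrite swap_card.
- exact: Y0sub.
- apply: (ole_trans hG) hBC; apply: (ole_trans hG) hex.
  apply: (oadd_mono hG) (ole_refl hG _); apply: bopt; last exact: X0sub.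
  by rewrite swap_card // yB.
- apply: (inc (x := x)) => //; first by rewrite !inE eqxx orbT.
  apply/subsetP => z; rewrite !inE => /andP[zB zC]; rewrite zC andbT.
  by apply/orP; left; apply: contraNneq yB => <-.
Qed.

Lemma brE (x x2 e : E) (C : {set E}) : #|C| = r -> Y0 \subset C -> ole (oadd (nu B) (nu C)) V ->
  x \in B :\: C -> x \notin X0 -> x2 \in B :\: C -> x2 \notin X0 -> x2 != x ->
  e \in C :\: B -> s = inr e ->
  ole (oadd (nu (B :\ x :|: [set e])) (nu (C :\ e :|: [set x]))) (oadd (nu B) (nu C)) ->
  ole (oadd (nu (B :\ x2 :|: [set e])) (nu (C :\ e :|: [set x2]))) (oadd (nu B) (nu C)) ->
  goalP \/ improve C.
Proof.
move=> hC hYC hBC xBC xX x2BC x2X x2x eCB hse P1 P2.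
move: (xBC) (x2BC) (eCB); rewrite !inE => /andP[xC xB] /andP[x2C x2B] /andP[eB eC].
have eT : inr e \notin T by rewrite -hse sT.
have hfx : ole (f (inter_E S)) (nu (B :\ x2 :|: [set e])).
  apply: f_le; first by rewrite swap_card // eB.
  apply/subsetP => z; rewrite inE_E => zS; rewrite !inE.
  case: (eqVneq (inr z) s) => [zs|zs].
    by move: zs; rewrite hse => -[->]; rewrite eqxx orbT.
  have zX : z \in X0 by rewrite inE_E !inE zs zS.
  rewrite (subsetP hXB _ zX) andbT; apply/orP; left.
  by apply: contraNneq x2X => <-.
have hfy : ole (f (inter_E T)) (nu (C :\ e :|: [set x])).
  apply: f_le; first by rewrite swap_card // xC.
  apply/subsetP => z; rewrite inE_E => zT; rewrite !inE.
  have zY : z \in Y0 by rewrite inE_E !inE zT.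
  rewrite (subsetP hYC _ zY) andbT; apply/orP; left.
  by apply: contraTneq zT => ->.
have hM2 := mix hG hV hVN P1 P2 hBC hfx hfy.
set B1 := B :\ x :|: [set e] in hM2 *; set C2 := C :\ e :|: [set x2] in hM2 *.
have hB1 : #|B1| = r by rewrite /B1 swap_card // eB.
have hC2 : #|C2| = r by rewrite /C2 swap_card // x2C.
have x2B1 : x2 \in B1 by rewrite !inE x2x x2B.
have eB1 : e \in B1 by rewrite !inE eqxx orbT.
have eC2 : e \notin C2.
  rewrite !inE eqxx /=; apply: contraNneq eB => ->; done.
have eBC : e \in B1 :\: C2 by rewrite inE eC2 eB1.
have [u uCB hex3] := hM.2 B1 C2 hB1 hC2 e eBC.
move: uCB; rewrite inE => /andP[uB1 uC2].
have ux2 : u != x2 by apply: contraNneq uB1 => ->.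
have uC : u \in C.
  by move: uC2; rewrite !inE (negbTE ux2) orbF => /andP[].
have ue : u != e by move: uC2; rewrite !inE (negbTE ux2) orbF => /andP[].
have ux : u != x by apply: contraNneq xC => <-.
have uB : u \notin B.
  apply: contra uB1 => uB; rewrite !inE uB andbT; apply/orP; left; exact: ux.

have X0B3 : X0 \subset B1 :\ e :|: [set u].
  apply: X0sub; first exact: X0sub.
  by apply: contraNN eB; apply: (subsetP hXB).
have hB3 : #|B1 :\ e :|: [set u]| = r by rewrite swap_card.
have hC3 : #|C2 :\ u :|: [set e]| = r by rewrite swap_card.
case uT: (inr u \in T).
  left; apply: (fin (t := inr u) (B1 := B1 :\ e :|: [set u]) (C1 := C2 :\ u :|: [set e])) => //.
  - by rewrite inE notS ?uT.
  - apply/subsetP => z; rewrite inE_E !inE => /orP[/andP[zs zS]|/eqP[->]]; last by rewrite eqxx orbT.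
    have zX : z \in X0 by rewrite inE_E !inE zs zS.
    by have := subsetP X0B3 _ zX; rewrite !inE.
  - apply/subsetP => z; rewrite inE_E !inE => /orP[/andP[zu zT]|/eqP].
      have zY : z \in Y0 by rewrite inE_E !inE zT.
      have zC := subsetP hYC _ zY.
      have ze : z != e by apply: contraTneq zT => ->.
      rewrite ze zC /=; apply/orP; left.
      by apply/andP; split => //; apply: contraNneq zu => ->.
    by rewrite hse => -[->]; rewrite eqxx orbT.
  - exact: (ole_trans hG) hex3 hM2.
right; exists (C2 :\ u :|: [set e]); split => //.
- apply/subsetP => z; rewrite inE_E !inE => /orP[zT|/eqP].
    have zY : z \in Y0 by rewrite inE_E !inE zT.
    have zC := subsetP hYC _ zY.
    have ze : z != e by apply: contraTneq zT => ->.
    rewrite ze zC /=; apply/orP; left.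
    by apply/andP; split => //; apply: contraTneq zT => ->; rewrite uT.
  by rewrite hse => -[->]; rewrite eqxx orbT.
- apply: (ole_trans hG) hM2; apply: (ole_trans hG) hex3.
  apply: (oadd_mono hG) (ole_refl hG _); exact: bopt.
- apply: (inc (x := x2)) => //.
    have x2C2 : x2 \in C2 by rewrite /C2 !inE eqxx orbT.
    by rewrite in_setU in_setD1 x2C2 eq_sym ux2.
  apply/subsetP => z; rewrite !inE => /andP[zB zC].
  have ze : z != e by apply: contraNneq eB => <-.
  have zu : z != u by apply: contraNneq uB => <-.
  by rewrite zu ze zC.
Qed.

Lemma step (C : {set E}) : #|C| = r -> Y0 \subset C -> ole (oadd (nu B) (nu C)) V ->
  goalP \/ improve C.
Proof.
move=> hC hYC hBC.
case: (pickP (fun t => (t \in T :\: S) && (if t is inr y then y \in B else true)))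
  => [t /andP[tTS ht]|hno].
  left; apply: (fin (t := t) (B1 := B) (C1 := C)) => //.
    apply/subsetP => z; rewrite inE_E !inE => /orP[/andP[zs zS]|/eqP zt].
      by apply: (subsetP hXB); rewrite inE_E !inE zs zS.
    by rewrite -zt in ht.
  apply/subsetP => z; rewrite inE_E !inE => /orP[/andP[zt zT]|zs];
    apply: (subsetP hYC); by rewrite inE_E !inE ?zT ?zs ?orbT.
have hall : forall t, t \in T :\: S -> exists y, t = inr y.
  move=> [q|y] tTS; last by exists y.
  by have := hno (inl q); rewrite tTS.
have hU : inter_E (T :\: S) \subset C :\: B.
  apply/subsetP => z; rewrite inE_E => zTS; have := hno (inr z); rewrite zTS /= => zB.
  rewrite inE zB /=; apply: (subsetP hYC); rewrite inE_E !inE.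
  by move: zTS; rewrite inE => /andP[_ ->].
have cU : #|inter_E (T :\: S)| = #|T :\: S| := card_E_eq hall.
have cST : #|T :\: S| = #|S :\: T| by apply: cardD_sym; rewrite hT hS.
have cBC : #|B :\: C| = #|C :\: B| by apply: cardD_sym; rewrite hB hC.
have hXC : X0 :\: C \subset inter_E ((S :\: T) :\ s).
  apply/subsetP => z; rewrite !inE => /andP[zC /andP[zs zS]]; rewrite zs zS andbT /=.
  apply: contra zC => zT; apply: (subsetP hYC); by rewrite inE_E !inE zT.
have c1 : (#|X0 :\: C| + 1 <= #|S :\: T|)%N.
  have := subset_leq_card hXC; have := card_E_le ((S :\: T) :\ s).
  rewrite [#|S :\: T|](cardsD1 s) hs add1n => h1 h2; rewrite addn1 ltnS; exact: leq_trans h2 h1.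
have cUC := subset_leq_card hU.
have : ~~ (B :\: C \subset X0 :\: C).
  apply/negP => hsub; have h := subset_leq_card hsub.
  have h2 : (#|S :\: T| <= #|X0 :\: C|)%N.
    by rewrite -cST -cU; apply: leq_trans cUC _; rewrite -cBC.
  by move: (leq_trans c1 h2); rewrite addn1 ltnn.
case/subsetPn => x xBC xXC.
have xX : x \notin X0.
  by move: xBC xXC; rewrite !inE => /andP[-> _]; rewrite andTb.
have [y yCB hex] := hM.2 B C hB hC x xBC.
case yT: (inr y \in T); first by left; apply: (brA hC hYC hBC xBC xX yCB yT hex).
case yY: (y \in Y0); last by right; apply: (brB hC hYC hBC xBC xX yCB (negbT yY) hex).
have hse : s = inr y.
  by move: yY; rewrite inE_E !inE yT /= => /eqP.
have hU2 : y |: inter_E (T :\: S) \subset C :\: B.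
  apply/subsetP => z; rewrite !inE => /orP[/eqP->|zTS]; first by move: yCB; rewrite inE.
  by have := subsetP hU z; rewrite inE_E inE zTS => /(_ isT); rewrite inE.
have cU2 := subset_leq_card hU2.
rewrite cardsU1 inE_E !inE yT /= in cU2.
have : ~~ ((B :\: C) :\ x \subset X0 :\: C).
  apply/negP => hsub; have h := subset_leq_card hsub.
  rewrite [#|B :\: C|](cardsD1 x) xBC in cBC.
  have h2 : (#|S :\: T| <= #|X0 :\: C|)%N.
    rewrite -cST -cU; apply: leq_trans h.
    rewrite andbF /= in cU2; rewrite -(leq_add2l 1).
    by move: cU2; rewrite -cBC.
  by move: (leq_trans c1 h2); rewrite addn1 ltnn.
case/subsetPn => x2; rewrite inE => /andP[x2x x2BC] x2XC.
have x2X : x2 \notin X0.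
  by move: x2BC x2XC; rewrite !inE => /andP[-> _]; rewrite andTb.
have [y2 y2CB hex2] := hM.2 B C hB hC x2 x2BC.
case y2T: (inr y2 \in T); first by left; apply: (brA hC hYC hBC x2BC x2X y2CB y2T hex2).
case y2Y: (y2 \in Y0); last by right; apply: (brB hC hYC hBC x2BC x2X y2CB (negbT y2Y) hex2).
have hy2 : y2 = y.
  move: y2Y; rewrite inE_E !inE y2T /= hse => /eqP; by case.
subst y2.
have x2x' : x2 != x by move: x2x; rewrite inE.
exact: (brE hC hYC hBC xBC xX x2BC x2X x2x' yCB hse hex hex2).
Qed.

Lemma mainL n (C : {set E}) : (r - #|B :&: C| < n)%N -> #|C| = r -> Y0 \subset C ->
  ole (oadd (nu B) (nu C)) V -> goalP.
Proof.
elim: n C => // n IH C hn hC hYC hBC.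
case: (step hC hYC hBC) => // -[C' [hC' hYC' hBC' hlt]].
apply: (IH C') => //.
have : (#|B :&: C'| <= r)%N by rewrite -hB subset_leq_card // subsetIl.
lia.
Qed.
End Step.

Lemma exch_main : goalP.
Proof.
have [fx [fy [ex ey]]] : exists a b, f (inter_E S) = Some a /\ f (inter_E T) = Some b.
  by move: hVN; rewrite hV; case: (f (inter_E S)); case: (f (inter_E T)) => // a b _; exists b, a.
have hfx : f (inter_E S) <> None by rewrite ex.
have [BX [hBX hXBX eBX optBX]] := f_opt hfx.
have hfy : f (inter_E T) <> None by rewrite ey.
have [CY [hCY hYCY eCY optCY]] := f_opt hfy.
have X0X : X0 \subset BX.
  apply: subset_trans hXBX; apply/subsetP => z; rewrite !inE => /andP[_ ->] //.
have fX0 : f X0 <> None.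
  move=> h; have := f_le hBX X0X; by rewrite h eBX ex.
have [B [hB hXB eB bopt]] := f_opt fX0.
have hVBC : V = oadd (nu BX) (nu CY) by rewrite hV eBX eCY.
have hBBX : ole (nu B) (nu BX) by apply: bopt.
have sS' := sS; have sT' := sT.
case: (boolP (Y0 \subset CY)) => hYC.
  apply: (@mainL B hB hXB bopt r.+1 CY) => //.
  - by rewrite ltnS leq_subr.
  - by rewrite hVBC; apply: (oadd_mono hG) (ole_refl hG _).
case/subsetPn: hYC => e eY eCYn.
have hse : s = inr e.
  move: eY; rewrite inE_E !inE => /orP[eT|/eqP -> //].
  by move: eCYn; rewrite (subsetP hYCY) // inE_E.
have eBXe : e \in BX by apply: (subsetP hXBX); rewrite inE_E -hse.
have eBC : e \in BX :\: CY by rewrite inE eBXe eCYn.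
have [u uCB hex] := hM.2 BX CY hBX hCY e eBC.
move: uCB; rewrite inE => /andP[uBX uCY].
have hB1 : #|BX :\ e :|: [set u]| = r by rewrite swap_card.
have hC1 : #|CY :\ u :|: [set e]| = r by rewrite swap_card.
case uT: (inr u \in T).
  apply: (fin (t := inr u) (B1 := BX :\ e :|: [set u]) (C1 := CY :\ u :|: [set e])) => //.
  - rewrite inE uT andbT; apply: contra uBX => uS; apply: (subsetP hXBX); by rewrite inE_E.
  - apply/subsetP => z; rewrite inE_E !inE => /orP[/andP[zs zS]|/eqP[->]]; last by rewrite eqxx orbT.
    rewrite (subsetP hXBX) ?inE_E // andbT; apply/orP; left.
    by apply: contraNneq zs => ->; rewrite hse.
  - apply/subsetP => z; rewrite inE_E !inE => /orP[/andP[zu zT]|/eqP].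
      rewrite (subsetP hYCY) ?inE_E // andbT; apply/orP; left.
      by apply: contraNneq zu => ->.
    by rewrite hse => -[->]; rewrite eqxx orbT.
  - by rewrite hVBC.
apply: (@mainL B hB hXB bopt r.+1 (CY :\ u :|: [set e])) => //.
- by rewrite ltnS leq_subr.
- apply/subsetP => z; rewrite inE_E !inE => /orP[zT|/eqP].
    rewrite (subsetP hYCY) ?inE_E // andbT; apply/orP; left.
    by apply: contraTneq zT => ->; rewrite uT.
  by rewrite hse => -[->]; rewrite eqxx orbT.
- rewrite hVBC; apply: (ole_trans hG) hex; apply: (oadd_mono hG) (ole_refl hG _).
  apply: bopt => //; apply/subsetP => z; rewrite !inE => /andP[zs zS].
  rewrite (subsetP hXBX) ?inE_E // andbT; apply/orP; left.
  by apply: contraNneq zs => ->; rewrite hse.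
Qed.
End Main.

Unset Implicit Arguments.

Theorem proposition1p1 (G : zmodType) (le : rel G)
  (hG : totally_ordered_group le)
  (E Q : finType) (r : nat) (nu : {set E} -> option G)
  (hM : valuated_matroid le r nu) :
  valuated_matroid le r (nu_ext (Q := Q) le r nu).
Proof.
split.
- case: (hM) => [[S0 [hS0 hN]] _].
  exists [set inr x | x in S0]; split.
    by rewrite card_imset //; exact: inr_inj.
  rewrite /nu_ext; have -> : inter_E [set (inr x : Q + E) | x in S0] = S0.
    apply/setP => z; rewrite inE_E; apply/imsetP/idP => [[w wS [->]] // | zS].
    by exists z.
  move=> h; have := f_le hG nu hS0 (subxx S0).
  by rewrite h; case: (nu S0) hN.
- move=> S T hS hT s hs.
  case hVe: (oadd (nu_tilde le r nu (inter_E S)) (nu_tilde le r nu (inter_E T))) => [v|].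
    have := exch_main hG hM hS hT hs (V := Some v) (esym hVe) (fun h => ltac:(discriminate h)).
    by rewrite /goalP -hVe.
  have : (0 < #|T :\: S|)%N.
    by rewrite (cardD_sym (A := T) (B := S)) ?hS ?hT //; apply/card_gt0P; exists s.
  case/card_gt0P => t ht; exists t => //.
  by case: (oadd _ _).
Qed.
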